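(* Let $(S,\Delta,\mathbb{P})$ be a probability space, $(U,d)$ a separable metric space, $\mathfrak{X}$ the set of $U$-valued random variables on $S$, $r\geq0$, and $\mathcal{I}$ an admissible ideal on $\mathbb{N}$. Then for every sequence $\underline{X}=\{X_n\}$ in $\mathfrak{X}$, the set $\Gamma^{r^s}_{\underline{X}}(\mathcal{I}^{\mathbb{P}})$ is closed in $(\mathfrak{X}^0,\rho)$.
   Context: The Ky Fan metric is $\rho(X,Y)=\inf\{\varepsilon>0:\mathbb{P}(d(X,Y)>\varepsilon)\leq\varepsilon\}$; $\mathfrak{X}^0$ is the set of equivalence classes of $\mathfrak{X}$ under almost sure equality, on which $\rho$ is a metric. An ideal on $\mathbb{N}$ is a family $\mathcal{I}\subseteq\mathcal{P}(\mathbb{N})$ with $\varnothing\in\mathcal{I}$, closed under finite unions and under subsets; it is admissible if $\mathbb{N}\notin\mathcal{I}$ and $\{t\}\in\mathcal{I}$ for every $t\in\mathbb{N}$. $\Gamma^{r^s}_{\underline{X}}(\mathcal{I}^{\mathbb{P}})$ is the set of $Y\in\mathfrak{X}$ with $\{n:\mathbb{P}(d(X_n,Y)<r+\varepsilon)>1-\delta\}\notin\mathcal{I}$ for all $\varepsilon,\delta>0$. *)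

(* Defs.v *)
From HB Require Import structures.
From mathcomp Require Import all_boot all_order all_algebra.
From mathcomp Require Import all_classical all_reals all_analysis.
Set Implicit Arguments. Unset Strict Implicit. Unset Printing Implicit Defensive.
Import Order.TTheory GRing.Theory Num.Theory.
Local Open Scope classical_set_scope.
Local Open Scope ring_scope.

Definition is_metric (R : realType) (U : Type) (d : U -> U -> R) : Prop :=
  (forall x y, 0 <= d x y) /\ (forall x y, d x y = 0 <-> x = y) /\
  (forall x y, d x y = d y x) /\ (forall x y z, d x z <= d x y + d y z).

Definition separable_metric (R : realType) (U : Type) (d : U -> U -> R) : Prop :=
  exists D : set U, countable D /\
    forall x (e : R), 0 < e -> exists2 y, D y & d x y < e.

Definition dopen (R : realType) (U : Type) (d : U -> U -> R) : set (set U) :=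
  [set O | forall x, O x -> exists2 e : R, 0 < e & [set y | d x y < e] `<=` O].

Definition dborel (R : realType) (U : Type) (d : U -> U -> R) : set (set U) :=
  <<s dopen d >>.

Definition random_var (dS : measure_display) (S : measurableType dS)
  (R : realType) (U : Type) (d : U -> U -> R) (X : S -> U) : Prop :=
  forall B, dborel d B -> measurable (X @^-1` B).

Definition kyfan (dS : measure_display) (S : measurableType dS) (R : realType)
  (P : probability S R) (U : Type) (d : U -> U -> R) (X Y : S -> U) : R :=
  inf [set e : R | 0 < e /\ (P [set s | (e < d (X s) (Y s))%R] <= e%:E)%E].

Definition ideal (I : set (set nat)) : Prop :=
  I set0 /\ (forall A B, I A -> I B -> I (A `|` B)) /\
  (forall A B, B `<=` A -> I A -> I B).

Definition admissible_ideal (I : set (set nat)) : Prop :=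
  ideal I /\ ~ I setT /\ (forall t : nat, I [set t]).

Definition Gamma_rs (dS : measure_display) (S : measurableType dS) (R : realType)
  (P : probability S R) (U : Type) (d : U -> U -> R) (X : nat -> S -> U)
  (r : R) (I : set (set nat)) : set (S -> U) :=
  [set Y | random_var d Y /\
    forall eps delta : R, 0 < eps -> 0 < delta ->
      ~ I [set n | ((1 - delta)%R%:E < P [set s | (d (X n s) (Y s) < r + eps)%R])%E]].

(* Main.v *)
Require Import Defs.
From HB Require Import structures.
From mathcomp Require Import all_boot all_order all_algebra.
From mathcomp Require Import all_classical all_reals all_analysis.
From mathcomp Require Import lra.
Set Implicit Arguments. Unset Strict Implicit.
Import Order.TTheory GRing.Theory Num.Theory.
Local Open Scope classical_set_scope.
Local Open Scope ring_scope.

Section S.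
Context (dS : measure_display) (S : measurableType dS) (R : realType) (U : Type) (d : U -> U -> R).

Lemma rv_open (X : S -> U) (O : set U) : random_var d X -> dopen d O -> measurable (X @^-1` O).
Proof. move=> hX hO; apply: hX; exact: sub_sigma_algebra. Qed.

Lemma pair_meas (D : set U) (Z Y : S -> U) (A B : U -> rat -> set U) :
  countable D -> random_var d Z -> random_var d Y ->
  (forall q t, dopen d (A q t)) -> (forall q t, dopen d (B q t)) ->
  measurable [set s | exists2 q, D q & exists t, A q t (Z s) /\ B q t (Y s)].
Proof.
move=> /countable_injP[f finj] hZ hY hA hB.
have -> : [set s | exists2 q, D q & exists t, A q t (Z s) /\ B q t (Y s)] =
  \bigcup_(n in [set: nat]) \bigcup_(t in [set: rat])
     [set s | exists2 q, D q /\ f q = n & A q t (Z s) /\ B q t (Y s)].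
  apply/seteqP; split => s /=.
    by move=> [q Dq [t [h1 h2]]]; exists (f q) => //; exists t => //; exists q.
  by move=> [n _ [t _ [q [Dq _] [h1 h2]]]]; exists q => //; exists t.
apply: bigcupT_measurable => n; apply: bigcupT_measurable_rat => t.
have [[q0 [Dq0 fq0]]|nq] := pselect (exists q, D q /\ f q = n).
  have -> : [set s | exists2 q, D q /\ f q = n & A q t (Z s) /\ B q t (Y s)] =
     (Z @^-1` A q0 t) `&` (Y @^-1` B q0 t).
    apply/seteqP; split => s /=.
      move=> [q [Dq fq] [h1 h2]].
      have qq : q = q0 by apply: finj; rewrite ?inE //; rewrite fq fq0.
      by subst q.
    by move=> [h1 h2]; exists q0.
  by apply: measurableI; apply: rv_open.
have -> : [set s | exists2 q, D q /\ f q = n & A q t (Z s) /\ B q t (Y s)] = set0.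
  apply/seteqP; split => s //= [q Dq _]; apply: nq; by exists q.
exact: measurable0.
Qed.
Lemma dopen_lt (hd : is_metric d) q (a : R) : dopen d [set y | d q y < a].
Proof.
case: hd => [d0 [deq [dsym dtr]]] y /= hy; exists (a - d q y); first by rewrite subr_gt0.
move=> z /= hz; have := dtr q y z; lra.
Qed.

Lemma dopen_gt (hd : is_metric d) q (a : R) : dopen d [set y | a < d q y].
Proof.
case: hd => [d0 [deq [dsym dtr]]] y /= hy; exists (d q y - a); first by rewrite subr_gt0.
move=> z /= hz; have := dtr q z y; rewrite (dsym z y); lra.
Qed.

Lemma approx (hd : is_metric d) (D : set U) :
  (forall x (e : R), 0 < e -> exists2 y, D y & d x y < e) ->
  forall x (g : R), 0 < g -> exists2 q, D q & exists t : rat,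
     d q x < ratr t /\ ratr t < g / 4.
Proof.
case: hd => [d0 [deq [dsym dtr]]] hD x g g0.
have [q Dq hq] := hD x (g / 4) ltac:(lra).
exists q => //; have [t] := @rat_in_itvoo R (d q x) (g / 4) ltac:(rewrite dsym; lra).
rewrite in_itv /= => /andP[h1 h2]; by exists t.
Qed.

Lemma meas_lt (hd : is_metric d) (hsep : separable_metric d) (Z Y : S -> U) (c : R) :
  random_var d Z -> random_var d Y -> measurable [set s | d (Z s) (Y s) < c].
Proof.
move=> hZ hY; have [D [Dc hD]] := hsep.
have -> : [set s | d (Z s) (Y s) < c] = [set s | exists2 q, D q & exists t : rat,
   [set x | d q x < ratr t] (Z s) /\ [set y | d q y < c - ratr t] (Y s)].
  have hd' := hd; case: hd' => [d0 [deq [dsym dtr]]].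
  apply/seteqP; split => s /=.
    move=> h; have [q Dq [t [h1 h2]]] := approx hd hD (Z s) (g := c - d (Z s) (Y s)) ltac:(lra).
    exists q => //; exists t; split => //; have := dtr q (Z s) (Y s); lra.
  move=> [q Dq [t [h1 h2]]]; have := dtr (Z s) q (Y s); rewrite (dsym (Z s) q); lra.
exact: (pair_meas Dc hZ hY (fun q t => dopen_lt (q:=q) (a:=ratr t) hd) (fun q t => dopen_lt (q:=q) (a:=c - ratr t) hd)).
Qed.

Lemma meas_gt (hd : is_metric d) (hsep : separable_metric d) (Z Y : S -> U) (c : R) :
  random_var d Z -> random_var d Y -> measurable [set s | c < d (Z s) (Y s)].
Proof.
move=> hZ hY; have [D [Dc hD]] := hsep.
have -> : [set s | c < d (Z s) (Y s)] = [set s | exists2 q, D q & exists t : rat,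
   [set x | d q x < ratr t] (Z s) /\ [set y | c + ratr t < d q y] (Y s)].
  have hd' := hd; case: hd' => [d0 [deq [dsym dtr]]].
  apply/seteqP; split => s /=.
    move=> h; have [q Dq [t [h1 h2]]] := approx hd hD (Z s) (g := d (Z s) (Y s) - c) ltac:(lra).
    exists q => //; exists t; split => //; have := dtr (Z s) q (Y s); rewrite (dsym (Z s) q); lra.
  move=> [q Dq [t [h1 h2]]]; have := dtr q (Z s) (Y s); lra.
exact: (pair_meas Dc hZ hY (fun q t => dopen_lt (q:=q) (a:=ratr t) hd) (fun q t => dopen_gt (q:=q) (a:=c + ratr t) hd)).
Qed.
End S.

Lemma aux_ereal (R : realType) (dl e' : R) (a b c : \bar R) :
  e' < dl / 2 -> ((1 - dl / 2)%:E < b)%E -> (b <= a + c)%E -> (c <= e'%:E)%E -> (0 <= c)%E ->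
  ((1 - dl)%:E < a)%E.
Proof.
case: a => [a||]; case: c => [c||]; case: b => [b||] //=;
  rewrite ?lte_fin ?lee_fin ?leey ?ltey ?leNye //= => *; try lra.
Qed.

Theorem proposition3p11 (dS : measure_display) (S : measurableType dS)
  (R : realType) (P : probability S R) (U : Type) (d : U -> U -> R)
  (hd : is_metric d) (hsep : separable_metric d)
  (r : R) (hr : 0 <= r) (I : set (set nat)) (hI : admissible_ideal I)
  (X : nat -> S -> U) (hX : forall n, random_var d (X n)) :
  forall Y : S -> U, random_var d Y ->
    (forall e : R, 0 < e ->
       exists2 Z, Gamma_rs P d X r I Z & kyfan P d Z Y < e) ->
    Gamma_rs P d X r I Y.
Proof.
move=> Y hY hcl; split => // eps delta eps0 delta0 hIY.
have [e [e0 [e1 e2]]] : exists e : R, 0 < e /\ e <= eps / 2 /\ e <= delta / 2.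
  by case: (leP eps delta) => h; [exists (eps / 2) | exists (delta / 2)]; lra.
have [Z [hZ hZG] hk] := hcl e e0.
have [e' [e'0 hPB] e'e] : exists2 e' : R, 0 < e' /\ (P [set s | (e' < d (Z s) (Y s))%R] <= e'%:E)%E & e' < e.
  apply: inf_lt hk; exists 1; split => //.
  by apply: probability_le1; apply: meas_gt.
apply: (hZG (eps / 2) (delta / 2)) => //; try lra.
case: hI => [[_ [_ hsub]] _]; apply: hsub hIY => n /= hn.
have hd' := hd; case: hd' => [d0 [deq [dsym dtr]]].
have mCY : measurable [set s | d (X n s) (Y s) < r + eps] by apply: meas_lt.
have mCZ : measurable [set s | d (X n s) (Z s) < r + eps / 2] by apply: meas_lt.
have mB : measurable [set s | e' < d (Z s) (Y s)] by apply: meas_gt.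
apply: (@aux_ereal R delta e' _ _ (P [set s | (e' < d (Z s) (Y s))%R]) _ hn) => //; first lra.
  apply: (le_trans _ (measureU2 P mCY mB)).
  apply: le_measure; rewrite ?inE //; first exact: measurableU.
  move=> s /= hs; case: (ltP e' (d (Z s) (Y s))) => h; [by right | left].
  have := dtr (X n s) (Z s) (Y s); lra.

Qed.
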